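(* Let $\Gamma$ be a locally finite connected hyperbolic graph with base vertex $x_0$, and let $G$ be a group acting properly and cocompactly by isometries on $\Gamma$. Then the atoms in $\mathcal{A}(\Gamma)$ fall into only finitely many types; that is, there is a finite set of atoms such that every atom of $\mathcal{A}(\Gamma)$ has the same type as one of them.
   Context: $\Gamma$ is identified with its vertex set with path metric $d$; $d_x(y)=d(x,y)$. Proper means finite vertex stabilizers, and cocompact means finitely many vertex orbits. Write $B_n=\{x:d(x_0,x)\le n\}$. For finite $B$, the atom of $x$ is $\{y:d_y-d_x\text{ is constant on }B\}$. $\mathcal{A}_n(\Gamma)$ is the set of infinite atoms for $B=B_n$. The tree of atoms $\mathcal{A}(\Gamma)$ is the disjoint union over $n\ge0$ of the $\mathcal{A}_n(\Gamma)$, where $A\in\mathcal{A}_{n+1}(\Gamma)$ is a child of $A'\in\mathcal{A}_n(\Gamma)$ iff $A\subseteq A'$. An element $g\in G$ induces a morphism from $A\in\mathcal{A}_m(\Gamma)$ to $A'\in\mathcal{A}_n(\Gamma)$ if three conditions hold: (i) $gA=A'$; (ii) $g(A\cap B_{m+k})=A'\cap B_{n+k}$ for all $k\ge0$; (iii) for each $k>0$ and each $A_1\in\mathcal{A}_{m+k}(\Gamma)$ with $A_1\subseteq A$, there is $A_2\in\mathcal{A}_{n+k}(\Gamma)$ with $A_2\subseteq A'$ and $gA_1=A_2$. Two atoms $A,A'$ have the same type if some $g\in G$ induces a morphism from $A$ to $A'$. *)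

(* Defs.v *)
From Stdlib Require Import ZArith List Classical ClassicalEpsilon.
Import ListNotations.
Open Scope Z_scope.

Section Graphs.
Variable V : Type.
Variable adj : V -> V -> Prop.

Inductive walk : V -> V -> nat -> Prop :=
| walk_nil : forall x, walk x x 0
| walk_cons : forall x y z n, adj x y -> walk y z n -> walk x z (S n).

Definition connected : Prop := forall x y, exists n, walk x y n.

Definition locally_finite : Prop :=
  forall x, exists l : list V, forall y, adj x y -> In y l.

Definition simple_graph : Prop :=
  (forall x y, adj x y -> adj y x) /\ (forall x, ~ adj x x).

(* path metric: the least length of a walk (meaningful for connected graphs) *)
Definition dist (x y : V) : nat :=
  epsilon (inhabits 0%nat) (fun n => walk x y n /\ forall m, walk x y m -> (n <= m)%nat).

Definition d (x y : V) : Z := Z.of_nat (dist x y).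

(* Gromov hyperbolicity (four-point condition with doubled Gromov products):
   (x|y)_w >= min((x|z)_w, (y|z)_w) - delta *)
Definition gromov2 (w x y : V) : Z := d x w + d y w - d x y.
Definition hyperbolic : Prop :=
  exists delta : Z, forall w x y z,
    gromov2 w x y >= Z.min (gromov2 w x z) (gromov2 w y z) - 2 * delta.

Definition finite_set (P : V -> Prop) : Prop :=
  exists l : list V, forall y, P y -> In y l.

Definition ball (x0 : V) (n : nat) (y : V) : Prop := (dist x0 y <= n)%nat.

Definition atom (x0 : V) (n : nat) (x : V) (y : V) : Prop :=
  exists c : Z, forall b, ball x0 n b -> d y b - d x b = c.

Definition set_eq (P Q : V -> Prop) : Prop := forall y, P y <-> Q y.
Definition subset (P Q : V -> Prop) : Prop := forall y, P y -> Q y.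

Definition in_An (x0 : V) (n : nat) (A : V -> Prop) : Prop :=
  (exists x, set_eq A (atom x0 n x)) /\ ~ finite_set A.

Variable G : Type.
Variable act : G -> V -> V.

Definition image (g : G) (P : V -> Prop) (y : V) : Prop :=
  exists z, P z /\ act g z = y.

Definition induces_morphism (x0 : V) (g : G) (m : nat) (A : V -> Prop)
    (n : nat) (A' : V -> Prop) : Prop :=
  set_eq (image g A) A' /\
  (forall k : nat,
     set_eq (image g (fun y => A y /\ ball x0 (m + k) y))
            (fun y => A' y /\ ball x0 (n + k) y)) /\
  (forall k : nat, (0 < k)%nat -> forall A1, in_An x0 (m + k) A1 -> subset A1 A ->
     exists A2, in_An x0 (n + k) A2 /\ subset A2 A' /\ set_eq (image g A1) A2).

Definition same_type (x0 : V) (m : nat) (A : V -> Prop) (n : nat) (A' : V -> Prop) : Prop :=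
  exists g : G, induces_morphism x0 g m A n A'.

End Graphs.

Section Groups.
Variables (V G : Type) (mul : G -> G -> G) (one : G) (inv : G -> G) (act : G -> V -> V).

Definition is_group : Prop :=
  (forall a b c, mul a (mul b c) = mul (mul a b) c) /\
  (forall a, mul one a = a) /\ (forall a, mul a one = a) /\
  (forall a, mul (inv a) a = one) /\ (forall a, mul a (inv a) = one).

Definition is_action : Prop :=
  (forall x, act one x = x) /\ (forall g h x, act (mul g h) x = act g (act h x)).

Definition acts_by_isometries (adj : V -> V -> Prop) : Prop :=
  forall g x y, d V adj (act g x) (act g y) = d V adj x y.

Definition proper_action : Prop :=
  forall x, exists l : list G, forall g, act g x = x -> In g l.

Definition cocompact_action : Prop :=
  exists l : list V, forall v, exists u g, In u l /\ act g u = v.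

End Groups.

(* Main.v *)
Require Import Defs.
From Stdlib Require Import ZArith List Lia Classical ClassicalEpsilon Arith Wf_nat.
Import ListNotations.

Lemma exists_min (P : nat -> Prop) : (exists n, P n) -> exists n, P n /\ forall m, P m -> (n <= m)%nat.
Proof.
  intros [n Hn]. revert Hn. induction n as [n IH] using lt_wf_ind. intros Hn.
  destruct (classic (exists m, P m /\ (m < n)%nat)) as [[m [Hm Hlt]]|Hno].
  - exact (IH m Hlt Hm).
  - exists n. split; auto. intros m Hm. destruct (Nat.lt_ge_cases m n) as [H|H]; auto.
    exfalso; apply Hno; eauto.
Qed.

Lemma ivt (h : nat -> Z) (c : Z) (m : nat) :
  (forall i, (i < m)%nat -> (Z.abs (h (S i) - h i) <= 1)%Z) -> (h 0%nat >= c)%Z -> (h m <= c)%Z ->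
  exists j, (j <= m)%nat /\ h j = c.
Proof.
  induction m; intros Hs H0 Hm.
  - exists 0%nat; split; [lia|lia].
  - destruct (Z_le_gt_dec (h m) c) as [Hle|Hgt].
    + destruct IHm as [j [Hj Hj']]; auto. exists j; split; auto.
    + exists (S m); split; auto. specialize (Hs m (Nat.lt_succ_diag_r m)). lia.
Qed.

Section Metric.
Variable V : Type.
Variable adj : V -> V -> Prop.
Hypothesis Hsym : forall x y, adj x y -> adj y x.
Hypothesis Hconn : connected V adj.

Notation walk := (walk V adj).
Notation dist := (dist V adj).
Notation D := (d V adj).

Lemma walk_app x y a : walk x y a -> forall z b, walk y z b -> walk x z (a+b).
Proof. induction 1; intros; simpl; auto. econstructor; eauto. Qed.

Lemma walk_snoc x y n : walk x y n -> forall z, adj y z -> walk x z (S n).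
Proof. intros H z Hz. replace (S n) with (n + 1)%nat by lia. eapply walk_app; eauto.
  econstructor; eauto. constructor. Qed.

Lemma walk_rev x y n : walk x y n -> walk y x n.
Proof. induction 1. constructor. eapply walk_snoc; eauto. Qed.

Lemma dist_spec x y : walk x y (dist x y) /\ forall m, walk x y m -> (dist x y <= m)%nat.
Proof.
  unfold Defs.dist. apply epsilon_spec.
  apply exists_min. apply Hconn.
Qed.

Lemma dist_walk x y : walk x y (dist x y).
Proof. apply dist_spec. Qed.
Lemma dist_le x y m : walk x y m -> (dist x y <= m)%nat.
Proof. apply dist_spec. Qed.

Lemma dist_tri x y z : (dist x z <= dist x y + dist y z)%nat.
Proof. apply dist_le. eapply walk_app; apply dist_walk. Qed.

Lemma dist_sym x y : dist x y = dist y x.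
Proof. apply Nat.le_antisymm; apply dist_le; apply walk_rev; apply dist_walk. Qed.

Lemma dist_refl x : dist x x = 0%nat.
Proof. pose proof (dist_le x x 0 (walk_nil _ _ x)). lia. Qed.

Lemma dist0 x y : dist x y = 0%nat -> x = y.
Proof. intros H. pose proof (dist_walk x y) as W. rewrite H in W. inversion W; auto. Qed.

Lemma dist_adj x y : adj x y -> (dist x y <= 1)%nat.
Proof. intros H. apply dist_le. econstructor; eauto. constructor. Qed.

Lemma dist1 x y : dist x y = 1%nat -> adj x y.
Proof. intros H. pose proof (dist_walk x y) as W. rewrite H in W. inversion W; subst.
  inversion H4; subst; auto. Qed.

Open Scope Z_scope.

Lemma D_nonneg x y : 0 <= D x y.
Proof. unfold d. lia. Qed.
Lemma D_sym x y : D x y = D y x.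
Proof. unfold d. rewrite dist_sym; auto. Qed.
Lemma D_refl x : D x x = 0.
Proof. unfold d. rewrite dist_refl; auto. Qed.
Lemma D_tri x y z : D x z <= D x y + D y z.
Proof. unfold d. pose proof (dist_tri x y z). lia. Qed.
Lemma D_eq0 x y : D x y = 0 -> x = y.
Proof. unfold d. intros. apply dist0. lia. Qed.
Lemma D_adj x y : adj x y -> D x y <= 1.
Proof. unfold d. intros H; pose proof (dist_adj x y H); lia. Qed.

Lemma walk_path x y n : walk x y n -> exists gam : nat -> V, gam 0%nat = x /\ gam n = y /\
  forall i, (i < n)%nat -> adj (gam i) (gam (S i)).
Proof.
  induction 1.
  - exists (fun _ => x). repeat split; auto. intros; lia.
  - destruct IHwalk as [g [E0 [E1 E2]]].
    exists (fun i => match i with 0%nat => x | S j => g j end). repeat split; auto.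
    intros [|i] Hi; simpl. subst; auto. apply E2; lia.
Qed.

Lemma geodesic x y : exists gam : nat -> V, gam 0%nat = x /\ gam (dist x y) = y /\
  (forall i, (i < dist x y)%nat -> D (gam i) (gam (S i)) <= 1) /\
  (forall i, (i <= dist x y)%nat -> D x (gam i) = Z.of_nat i /\ D (gam i) y = Z.of_nat (dist x y) - Z.of_nat i).
Proof.
  destruct (walk_path _ _ _ (dist_walk x y)) as [g [H0 [H1 H2]]].
  set (n := dist x y) in *.
  assert (A1 : forall i, (i <= n)%nat -> D x (g i) <= Z.of_nat i).
  { induction i; intros Hi. rewrite H0, D_refl; lia.
    pose proof (D_tri x (g i) (g (S i))). pose proof (D_adj _ _ (H2 i ltac:(lia))).
    specialize (IHi ltac:(lia)). lia. }
  assert (A2 : forall j, (j <= n)%nat -> D (g (n - j)%nat) y <= Z.of_nat j).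
  { induction j; intros Hj. replace (n - 0)%nat with n by lia. rewrite H1, D_refl; lia.
    pose proof (D_tri (g (n - S j)%nat) (g (n - j)%nat) y).
    assert (E : (n - j = S (n - S j))%nat) by lia.
    pose proof (D_adj _ _ (H2 (n - S j)%nat ltac:(lia))). rewrite <- E in H3.
    specialize (IHj ltac:(lia)). lia. }
  exists g. split; [auto|split; [auto|split]].
  - intros i Hi. apply D_adj, H2; auto.
  - intros i Hi. pose proof (A1 i Hi). pose proof (A2 (n - i)%nat ltac:(lia)).
    replace (n - (n - i))%nat with i in H3 by lia.
    pose proof (D_tri x (g i) y). assert (Dn : D x y = Z.of_nat n) by reflexivity. lia.
Qed.

End Metric.

Section Hyp.
Variable V : Type.
Variable adj : V -> V -> Prop.
Hypothesis Hsym : forall x y, adj x y -> adj y x.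
Hypothesis Hconn : connected V adj.
Variable x0 : V.
Variable K : Z.
Hypothesis HK : (0 <= K)%Z.
Notation D := (d V adj).
Open Scope Z_scope.
Hypothesis FP : forall w a b c,
  D a w + D b w - D a b >= D a w + D c w - D a c - K \/
  D a w + D b w - D a b >= D b w + D c w - D b c - K.

Ltac sy a b := pose proof (D_sym V adj Hsym Hconn a b).
Ltac tr a b c := pose proof (D_tri V adj Hconn a b c).
Ltac nn a b := pose proof (D_nonneg V adj a b).
Ltac rf a := pose proof (D_refl V adj Hconn a).

Lemma T_lem s t a al be : D s x0 = D t x0 -> D a s + D s x0 - D a x0 <= al ->
  D a t + D t x0 - D a x0 <= be -> D s t <= al + be + K.
Proof.
  intros H1 H2 H3. destruct (FP s a x0 t) as [F|F];
  sy a s; sy x0 s; sy t s; sy a t; sy x0 t; tr a t x0; tr a s x0; tr a s t; lia.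
Qed.

Lemma Near p z a n e : D p x0 = n -> D z x0 = D z p + n -> D z a + D a x0 - D z x0 <= e ->
  D a x0 >= n -> D p a + n - D a x0 <= e + K.
Proof.
  intros H1 H2 H3 H4. destruct (FP p z x0 a) as [F|F];
  sy z p; sy x0 p; sy a p; sy z a; sy x0 a; tr z a x0; lia.
Qed.

Lemma Tr z b (gam : nat -> V) (L : nat) :
  gam 0%nat = z -> gam L = b -> D z b = Z.of_nat L ->
  (forall i, (i < L)%nat -> D (gam i) (gam (S i)) <= 1) ->
  (forall i, (i <= L)%nat -> D z (gam i) = Z.of_nat i /\ D (gam i) b = Z.of_nat L - Z.of_nat i) ->
  exists m, (m <= L)%nat /\ D z (gam m) + D (gam m) x0 - D z x0 <= K + 2 /\
    D (gam m) b + D (gam m) x0 - D b x0 <= K /\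
    forall j, (j <= m)%nat -> D z (gam j) + D (gam j) x0 - D z x0 <= D z (gam m) + D (gam m) x0 - D z x0.
Proof.
  intros G0 GL DL Gs Gd.
  assert (Mono : forall j k, (j + k <= L)%nat ->
     D z (gam j) + D (gam j) x0 - D z x0 <= D z (gam (j+k)%nat) + D (gam (j+k)%nat) x0 - D z x0).
  { intros j k; induction k; intros Hk. rewrite Nat.add_0_r; lia.
    specialize (IHk ltac:(lia)). replace (j + S k)%nat with (S (j + k)) by lia.
    pose proof (Gs (j+k)%nat ltac:(lia)). destruct (Gd (j+k)%nat ltac:(lia)).
    destruct (Gd (S (j+k))%nat ltac:(lia)).
    tr (gam (j+k)%nat) (gam (S (j+k))) x0. lia. }
  destruct (exists_min (fun m => (m <= L)%nat /\ D (gam m) b + D (gam m) x0 - D b x0 <= K)) as [m [[Hm1 Hm2] Hmin]].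
  { exists L. split; auto. destruct (Gd L ltac:(lia)). rewrite GL in *. sy b x0. lia. }
  exists m. split; auto. split; [|split; auto].
  - destruct m as [|m'].
    + rewrite G0. rf z. sy z x0. lia.
    + assert (Hn : ~ (D (gam m') b + D (gam m') x0 - D b x0 <= K)).
      { intro Hc. assert (Hle : (m' <= L)%nat) by lia. specialize (Hmin m' (conj Hle Hc)). lia. }
      destruct (Gd m' ltac:(lia)). destruct (Gd (S m') ltac:(lia)). pose proof (Gs m' ltac:(lia)).
      tr (gam m') (gam (S m')) x0.
      destruct (FP (gam m') z b x0) as [F|F];
      sy z (gam m'); sy b (gam m'); sy x0 (gam m'); sy z x0; sy b x0; lia.
  - intros j Hj. replace m with (j + (m - j))%nat by lia. apply Mono. lia.
Qed.

Lemma depth_step (u v : V) : D u v <= 1 -> Z.abs (D v x0 - D u x0) <= 1.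
Proof. intros H. tr v u x0. tr u v x0. sy u v. lia. Qed.

Lemma LD p z b n : D p x0 = n -> D z x0 = D z p + n -> D b x0 <= n ->
  exists w, D w x0 <= n /\ D w p <= 4*K+2 /\ D z b = D z w + D w b.
Proof.
  intros Hp Hz Hb.
  destruct (geodesic V adj Hconn z b) as [gam [G0 [GL [Gs Gd]]]].
  set (L := Defs.dist V adj z b) in *.
  assert (DL : D z b = Z.of_nat L) by reflexivity.
  destruct (Tr z b gam L G0 GL DL Gs Gd) as [m [Hm [Hf [Hg Hmono]]]].
  destruct (Z_le_gt_dec n (D (gam m) x0)) as [Hr|Hr].
  - pose proof (Near p z (gam m) n (K+2) Hp Hz Hf ltac:(lia)).
    exists b. rf b. split; auto. split; [|lia].
    tr b (gam m) p. sy b (gam m). sy p (gam m). nn (gam m) b. lia.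
  - destruct (ivt (fun i => D (gam i) x0) n m) as [j [Hj Hj']].
    + intros i Hi. apply depth_step. apply Gs. lia.
    + simpl. rewrite G0. nn z p. lia.
    + simpl. lia.
    + simpl in Hj'. exists (gam j). split; [lia|split].
      * pose proof (Hmono j Hj). pose proof (T_lem (gam j) p z (K+2) 0 ltac:(lia) ltac:(lia) ltac:(sy z x0; lia)).
        lia.
      * destruct (Gd j ltac:(lia)). lia.
Qed.

Lemma Cstar p z b n : D p x0 = n -> D z x0 = D z p + n ->
  (forall q, D q p <= 5*K+2 -> D b x0 <> D b q + D q x0) ->
  exists w, D w x0 <= n /\ D z b = D z w + D w b.
Proof.
  intros Hp Hz Hreg.
  destruct (geodesic V adj Hconn z b) as [gam [G0 [GL [Gs Gd]]]].
  set (L := Defs.dist V adj z b) in *.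
  assert (DL : D z b = Z.of_nat L) by reflexivity.
  destruct (classic (exists i, (i <= L)%nat /\ D (gam i) x0 <= n)) as [[i [Hi Hi']]|Hno].
  { exists (gam i). split; auto. destruct (Gd i Hi). lia. }
  destruct (Tr z b gam L G0 GL DL Gs Gd) as [m [Hm [Hf [Hg Hmono]]]].
  assert (Hr : D (gam m) x0 > n).
  { destruct (Z_le_gt_dec (D (gam m) x0) n); auto. exfalso; apply Hno; eauto. }
  assert (Hbx : D b x0 > n).
  { destruct (Z_le_gt_dec (D b x0) n); auto. exfalso; apply Hno. exists L. rewrite GL. split; auto. }
  destruct (geodesic V adj Hconn b x0) as [gam2 [G20 [G2L [G2s G2d]]]].
  set (L2 := Defs.dist V adj b x0) in *.
  assert (DL2 : D b x0 = Z.of_nat L2) by reflexivity.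
  set (i := Z.to_nat (D b x0 - n)).
  nn p x0. destruct (G2d i ltac:(unfold i; lia)) as [Q1 Q2].
  set (q := gam2 i) in *.
  assert (Qd : D q x0 = n) by (unfold i in Q2; lia).
  assert (Qc : D b x0 = D b q + n) by (unfold i in Q1; lia).
  pose proof (Near p z (gam m) n (K+2) Hp Hz Hf ltac:(lia)) as N1.
  pose proof (Near q b (gam m) n K Qd Qc ltac:(sy b (gam m); lia) ltac:(lia)) as N2.
  pose proof (T_lem p q (gam m) (2*K+2) (2*K) ltac:(lia) ltac:(sy (gam m) p; lia) ltac:(sy (gam m) q; lia)) as N3.
  exfalso. apply (Hreg q). sy q p. lia. lia.
Qed.

Lemma GeoNear a b q : exists qb, D a qb + D qb b = D a b /\ D q qb <= D a q + D b q - D a b + K.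
Proof.
  destruct (geodesic V adj Hconn a b) as [gam [G0 [GL [Gs Gd]]]].
  set (L := Defs.dist V adj a b) in *.
  assert (DL : D a b = Z.of_nat L) by reflexivity.
  destruct (Z_le_gt_dec (D a q) (D a b)) as [H|H].
  - set (i := Z.to_nat (D a q)). destruct (Gd i ltac:(unfold i; nn a q; lia)) as [Q1 Q2].
    exists (gam i). split. lia.
    assert (Ei : Z.of_nat i = D a q) by (unfold i; nn a q; lia).
    destruct (FP (gam i) a b q) as [F|F];
    sy a (gam i); sy b (gam i); sy q (gam i); nn a q; tr a q b; sy b q; lia.
  - exists b. rf b. split. lia. nn q b. sy b q. lia.
Qed.

Lemma GL_lem p q b u c : D q p <= 5*K+2 -> D b x0 = D b q + D q x0 -> D q x0 >= K+1 ->
  (forall w, D w p <= 7*K+3 -> D u w = D x0 w + c) -> D b u = D b x0 + c.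
Proof.
  intros Hq Hbq Hqx Hloc.
  assert (Uq : D u q = D x0 q + c) by (apply Hloc; lia).
  destruct (geodesic V adj Hconn q x0) as [gam [G0 [GL [Gs Gd]]]].
  set (L := Defs.dist V adj q x0) in *.
  assert (DL : D q x0 = Z.of_nat L) by reflexivity.
  set (i := Z.to_nat (K+1)). destruct (Gd i ltac:(unfold i; lia)) as [Q1 Q2].
  set (qt := gam i) in *.
  assert (Ut : D u qt = D x0 qt + c).
  { apply Hloc. tr qt q p. sy qt q. unfold i in Q1. lia. }
  assert (Gk : D b q + D u q - D b u <= K).
  { destruct (FP q b qt u) as [F|F]; tr b qt x0; sy qt q; sy u q; sy qt u; sy x0 qt; sy x0 q;
    sy qt x0; sy q x0; unfold i in *; lia. }
  destruct (GeoNear b u q) as [qb [E1 E2]].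
  assert (Uqb : D u qb = D x0 qb + c).
  { apply Hloc. tr qb q p. sy qb q. sy u q. nn b u. lia. }
  tr b qb x0. sy qb u. sy x0 qb. tr b q u. sy q u. sy x0 q. lia.
Qed.

End Hyp.

Section Atoms.
Variable V : Type.
Variable adj : V -> V -> Prop.
Variable x0 : V.
Notation D := (d V adj).
Notation atom := (atom V adj x0).
Notation ball := (ball V adj x0).

Lemma ballD N b : ball N b <-> (D x0 b <= Z.of_nat N)%Z.
Proof. unfold Defs.ball, d. lia. Qed.

Lemma atom_refl N x : atom N x x.
Proof. exists 0%Z. intros; lia. Qed.
Lemma atom_sym N x y : atom N x y -> atom N y x.
Proof. intros [c Hc]. exists (-c)%Z. intros b Hb. specialize (Hc b Hb). lia. Qed.
Lemma atom_trans N x y z : atom N x y -> atom N y z -> atom N x z.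
Proof. intros [c Hc] [c' Hc']. exists (c + c')%Z. intros b Hb. specialize (Hc b Hb). specialize (Hc' b Hb). lia. Qed.
Lemma atom_mono N k x y : atom (N + k) x y -> atom N x y.
Proof. intros [c Hc]. exists c. intros b Hb. apply Hc. unfold Defs.ball in *. lia. Qed.
End Atoms.

Section Transfer.
Variable V : Type.
Variable adj : V -> V -> Prop.
Hypothesis Hsym : forall x y, adj x y -> adj y x.
Hypothesis Hconn : connected V adj.
Variable x0 : V.
Variable K : Z.
Hypothesis HK : (0 <= K)%Z.
Notation D := (d V adj).
Notation atom := (atom V adj x0).
Open Scope Z_scope.
Hypothesis FP : forall w a b c,
  D a w + D b w - D a b >= D a w + D c w - D a c - K \/
  D a w + D b w - D a b >= D b w + D c w - D b c - K.
Variable G : Type.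
Variable act : G -> V -> V.
Hypothesis Hisom : forall g x y, D (act g x) (act g y) = D x y.

Ltac sy a b := pose proof (D_sym V adj Hsym Hconn a b).
Ltac tr a b c := pose proof (D_tri V adj Hconn a b c).
Ltac nn a b := pose proof (D_nonneg V adj a b).
Ltac rf a := pose proof (D_refl V adj Hconn a).

Variables (n n' : nat) (x x' p p' : V) (g h : G).
Hypothesis Hgh : forall v, act h (act g v) = v.
Hypothesis Hhg : forall v, act g (act h v) = v.
Hypothesis Hp : D p x0 = Z.of_nat n.
Hypothesis Hp' : D p' x0 = Z.of_nat n'.
Hypothesis Hn : Z.of_nat n >= 6*K+3.
Hypothesis Hx : D x x0 = D x p + Z.of_nat n.
Hypothesis Hx' : D x' x0 = D x' p' + Z.of_nat n'.
Hypothesis Hgp : act g p = p'.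
Hypothesis Hlab : forall w, D w p <= 7*K+3 -> D x0 (act g w) - Z.of_nat n' = D x0 w - Z.of_nat n.
Hypothesis Hrho : forall w, D w p <= 7*K+3 -> D x' (act g w) - D x' p' = D x w - D x p.

Definition Reg (b : V) := exists q, D q p <= 5*K+2 /\ D b x0 = D b q + D q x0.

Lemma atom_cone y : atom n x y -> D y x0 = D y p + Z.of_nat n.
Proof.
  intros [c Hc]. pose proof (Hc x0 ltac:(apply ballD; rf x0; lia)).
  pose proof (Hc p ltac:(apply ballD; sy x0 p; lia)). sy x0 y. sy x0 x. lia.
Qed.

Lemma level b : Reg b -> D x0 (act g b) - Z.of_nat n' = D x0 b - Z.of_nat n.
Proof.
  intros [q [Hq Hbq]].
  set (u := act h x0).
  assert (Hloc : forall w, D w p <= 7*K+3 -> D u w = D x0 w + (Z.of_nat n' - Z.of_nat n)).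
  { intros w Hw. rewrite <- (Hisom g). unfold u. rewrite Hhg. pose proof (Hlab w Hw). lia. }
  assert (Hqx : D q x0 >= K+1) by (tr p q x0; sy p q; lia).
  pose proof (GL_lem V adj Hsym Hconn x0 K HK FP p q b u _ Hq Hbq Hqx Hloc).
  rewrite <- (Hisom g) in H. unfold u in H. rewrite Hhg in H. sy x0 (act g b). sy x0 b. lia.
Qed.

Lemma T2 y : atom n x y -> D x0 (act g y) - Z.of_nat n' = D x0 y - Z.of_nat n.
Proof.
  intros Hy. apply level. exists p. rf p. split. lia. rewrite Hp. apply atom_cone; auto.
Qed.

Lemma cone' y : atom n x y -> D (act g y) x0 = D (act g y) p' + Z.of_nat n'.
Proof.
  intros Hy. pose proof (T2 y Hy). pose proof (atom_cone y Hy).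
  rewrite <- Hgp. rewrite Hisom. sy x0 (act g y). sy x0 y. lia.
Qed.

Lemma T1 y : atom n x y -> atom n' x' (act g y).
Proof.
  intros Hy. destruct Hy as [cy Hcy].
  set (c' := cy + D x p - D x' p').
  assert (LA : forall w1, D w1 p' <= 7*K+3 -> D x0 w1 <= Z.of_nat n' -> D (act g y) w1 = D x' w1 + c').
  { intros w1 H1 H2. set (w := act h w1).
    assert (Ew : act g w = w1) by (unfold w; apply Hhg).
    assert (Dw : D w p <= 7*K+3) by (rewrite <- (Hisom g), Ew, Hgp; auto).
    pose proof (Hlab w Dw). rewrite Ew in H.
    pose proof (Hcy w ltac:(apply ballD; lia)).
    pose proof (Hrho w Dw). rewrite Ew in H3.
    rewrite <- Ew at 1. rewrite Hisom. unfold c'. lia. }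
  exists c'. intros b Hb0. apply ballD in Hb0. assert (Hb : D b x0 <= Z.of_nat n') by (sy b x0; lia).
  assert (Hcy' : atom n x y) by (exists cy; auto).
  destruct (LD V adj Hsym Hconn x0 K HK FP p' (act g y) b (Z.of_nat n') Hp' ltac:(apply cone'; auto) Hb)
    as [w1 [W1 [W2 W3]]].
  destruct (LD V adj Hsym Hconn x0 K HK FP p' x' b (Z.of_nat n') Hp' Hx' Hb) as [w2 [V1 [V2 V3]]].
  pose proof (LA w1 ltac:(lia) ltac:(sy x0 w1; lia)). pose proof (LA w2 ltac:(lia) ltac:(sy x0 w2; lia)).
  tr (act g y) w2 b. tr x' w1 b. lia.
Qed.

Lemma T3 y y' k : atom n x y -> atom n x y' -> atom (n + k) y y' -> atom (n' + k) (act g y) (act g y').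
Proof.
  intros [cy Hcy] [cy' Hcy'] [c Hc]. exists c. intros b' Hb'. apply ballD in Hb'.
  set (b := act h b'). assert (Eb : act g b = b') by apply Hhg.
  rewrite <- Eb. rewrite !Hisom.
  destruct (classic (Reg b)) as [HR|HR].
  - pose proof (level b HR). rewrite Eb in H. apply Hc. apply ballD. rewrite Nat2Z.inj_add in *. lia.
  - assert (Hc0 : D y' p - D y p = c) by (apply Hc; apply ballD; sy x0 p; lia).
    assert (Hya : atom n x y) by (exists cy; auto). assert (Hya' : atom n x y') by (exists cy'; auto).
    assert (HR' : forall q, D q p <= 5*K+2 -> D b x0 <> D b q + D q x0).
    { intros q Hq E. apply HR. exists q. auto. }
    destruct (Cstar V adj Hsym Hconn x0 K HK FP p y b (Z.of_nat n) Hp (atom_cone y Hya) HR') as [w [W1 W2]].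
    destruct (Cstar V adj Hsym Hconn x0 K HK FP p y' b (Z.of_nat n) Hp (atom_cone y' Hya') HR') as [w' [W1' W2']].
    pose proof (Hcy w ltac:(apply ballD; sy x0 w; lia)). pose proof (Hcy' w ltac:(apply ballD; sy x0 w; lia)).
    pose proof (Hcy w' ltac:(apply ballD; sy x0 w'; lia)). pose proof (Hcy' w' ltac:(apply ballD; sy x0 w'; lia)).
    pose proof (Hcy p ltac:(apply ballD; sy x0 p; lia)). pose proof (Hcy' p ltac:(apply ballD; sy x0 p; lia)).
    tr y' w b. tr y w' b. lia.
Qed.
End Transfer.

Section Morph.
Variable V : Type.
Variable adj : V -> V -> Prop.
Hypothesis Hsym : forall x y, adj x y -> adj y x.
Hypothesis Hconn : connected V adj.
Variable x0 : V.
Variable K : Z.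
Hypothesis HK : (0 <= K)%Z.
Notation D := (d V adj).
Notation atom := (atom V adj x0).
Open Scope Z_scope.
Hypothesis FP : forall w a b c,
  D a w + D b w - D a b >= D a w + D c w - D a c - K \/
  D a w + D b w - D a b >= D b w + D c w - D b c - K.
Variable G : Type.
Variable act : G -> V -> V.
Hypothesis Hisom : forall g x y, D (act g x) (act g y) = D x y.

Definition THyp (n n' : nat) (x x' p p' : V) (g h : G) : Prop :=
  (forall v, act h (act g v) = v) /\ (forall v, act g (act h v) = v) /\
  D p x0 = Z.of_nat n /\ D p' x0 = Z.of_nat n' /\
  Z.of_nat n >= 6*K+3 /\ Z.of_nat n' >= 6*K+3 /\
  D x x0 = D x p + Z.of_nat n /\ D x' x0 = D x' p' + Z.of_nat n' /\
  act g p = p' /\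
  (forall w, D w p <= 7*K+3 -> D x0 (act g w) - Z.of_nat n' = D x0 w - Z.of_nat n) /\
  (forall w, D w p <= 7*K+3 -> D x' (act g w) - D x' p' = D x w - D x p).

Lemma THyp_swap n n' x x' p p' g h : THyp n n' x x' p p' g h -> THyp n' n x' x p' p h g.
Proof.
  intros (H1&H2&H3&H4&H5&H6&H7&H8&H9&H10&H11).
  repeat split; auto.
  - rewrite <- H9; auto.
  - intros w Hw. assert (Dw : D (act h w) p <= 7*K+3) by (rewrite <- (Hisom g), H2, H9; auto).
    pose proof (H10 _ Dw). rewrite H2 in H. lia.
  - intros w Hw. assert (Dw : D (act h w) p <= 7*K+3) by (rewrite <- (Hisom g), H2, H9; auto).
    pose proof (H11 _ Dw). rewrite H2 in H. lia.
Qed.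

Ltac useT L n n' x x' p p' g h := eapply (L V adj Hsym Hconn x0 K HK FP G act Hisom n n' x x' p p' g h); eauto.

Lemma M_T1 n n' x x' p p' g h : THyp n n' x x' p p' g h -> forall y, atom n x y -> atom n' x' (act g y).
Proof. intros (H1&H2&H3&H4&H5&H6&H7&H8&H9&H10&H11). intros y Hy. useT T1 n n' x x' p p' g h. Qed.
Lemma M_T2 n n' x x' p p' g h : THyp n n' x x' p p' g h -> forall y, atom n x y ->
  D x0 (act g y) - Z.of_nat n' = D x0 y - Z.of_nat n.
Proof. intros (H1&H2&H3&H4&H5&H6&H7&H8&H9&H10&H11). intros y Hy. eapply (T2 V adj Hsym Hconn x0 K HK FP G act Hisom n n' x p g h); eauto. Qed.
Lemma M_T3 n n' x x' p p' g h : THyp n n' x x' p p' g h -> forall y y' k, atom n x y -> atom n x y' ->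
  atom (n + k) y y' -> atom (n' + k) (act g y) (act g y').
Proof. intros (H1&H2&H3&H4&H5&H6&H7&H8&H9&H10&H11). intros y y' k Hy Hy' Hk. eapply (T3 V adj Hsym Hconn x0 K HK FP G act Hisom n n' x p g h); eauto. Qed.

Lemma morph n n' x x' p p' g h A A' : THyp n n' x x' p p' g h ->
  set_eq V A (atom n x) -> set_eq V A' (atom n' x') ->
  induces_morphism V adj G act x0 g n A n' A'.
Proof.
  intros TH HA HA'. pose proof (THyp_swap _ _ _ _ _ _ _ _ TH) as TH'.
  pose proof TH as (H1&H2&_).
  split; [|split].
  - intros z. split.
    + intros [y [Hy E]]. subst z. apply HA'. apply HA in Hy. eapply M_T1; eauto.
    + intros Hz. apply HA' in Hz. exists (act h z). split; auto. apply HA. eapply M_T1; eauto.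
  - intros k z. split.
    + intros [y [[Hy Hb] E]]. subst z. apply HA in Hy. split. apply HA'. eapply M_T1; eauto.
      pose proof (M_T2 _ _ _ _ _ _ _ _ TH y Hy). apply ballD in Hb. apply ballD. rewrite Nat2Z.inj_add in *. lia.
    + intros [Hz Hb]. apply HA' in Hz. exists (act h z). split; auto. split. apply HA. eapply M_T1; eauto.
      pose proof (M_T2 _ _ _ _ _ _ _ _ TH' z Hz). apply ballD in Hb. apply ballD. rewrite Nat2Z.inj_add in *. lia.
  - intros k Hk A1 [[x1 HA1] Hinf] Hsub.
    assert (X1 : A1 x1) by (apply HA1; apply atom_refl).
    assert (X1A : atom n x x1) by (apply HA; apply Hsub; auto).
    exists (image V G act g A1). split; [split|split].
    + exists (act g x1). intros z. split.
      * intros [y [Hy E]]. subst z. apply (M_T3 _ _ _ _ _ _ _ _ TH); auto.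
        apply HA. apply Hsub; auto. apply HA1; auto.
      * intros Hz. exists (act h z).
        assert (Z1 : atom n' x' (act g x1)) by (eapply M_T1; eauto).
        assert (Z2 : atom n' x' z) by (eapply atom_trans; eauto; eapply atom_mono; eauto).
        pose proof (M_T3 _ _ _ _ _ _ _ _ TH' (act g x1) z k Z1 Z2 Hz). rewrite H1 in H.
        split; auto. apply HA1; auto.
    + intros [l Hl]. apply Hinf. exists (map (act h) l). intros y Hy.
      specialize (Hl (act g y) (ex_intro _ y (conj Hy eq_refl))). apply in_map with (f := act h) in Hl.
      rewrite H1 in Hl. auto.
    + intros z [y [Hy E]]. subst z. apply HA'. eapply M_T1; eauto. apply HA. apply Hsub; auto.
    + intros z. tauto.
Qed.
End Morph.

Lemma finite_classes (X Key : Type) (P : X -> Prop) (E : X -> X -> Prop) (KR : X -> Key -> Prop)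
  (keys : list Key) :
  (forall a, P a -> exists k, In k keys /\ KR a k) ->
  (forall a b k, P a -> P b -> KR a k -> KR b k -> E a b) ->
  exists reps : list X, (forall r, In r reps -> P r) /\ forall a, P a -> exists r, In r reps /\ E a r.
Proof.
  intros Hk HE.
  assert (Gen : forall l, exists reps : list X, (forall r, In r reps -> P r) /\
     forall a, P a -> (exists k, In k l /\ KR a k) -> exists r, In r reps /\ E a r).
  { induction l as [|k l IH].
    - exists []. split. intros r []. intros a _ [k [[] _]].
    - destruct IH as [reps [R1 R2]].
      destruct (classic (exists a, P a /\ KR a k)) as [[a0 [Pa0 Ka0]]|Hno].
      + exists (a0 :: reps). split.
        * intros r [<-|Hr]; auto.
        * intros a Pa [k' [[<-|Hk'] Hka]].
          -- exists a0. split. left; auto. eapply HE; eauto.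
          -- destruct (R2 a Pa (ex_intro _ k' (conj Hk' Hka))) as [r [Hr Er]]. exists r; split; auto. right; auto.
      + exists reps. split; auto.
        intros a Pa [k' [[<-|Hk'] Hka]].
        * exfalso; apply Hno; eauto.
        * apply R2; eauto. }
  destruct (Gen keys) as [reps [R1 R2]]. exists reps. split; auto.
Qed.

Fixpoint allL (len : nat) (vals : list Z) : list (list Z) :=
  match len with
  | O => [[]]
  | S m => flat_map (fun v => map (cons v) (allL m vals)) vals
  end.

Lemma allL_in vals l : (forall z, In z l -> In z vals) -> In l (allL (length l) vals).
Proof.
  induction l as [|a l IH]; intros H; simpl. auto.
  apply in_flat_map. exists a. split. apply H; left; auto.
  apply in_map. apply IH. intros z Hz; apply H; right; auto.
Qed.

Definition rng (R : Z) : list Z := map (fun i => Z.of_nat i - R)%Z (seq 0 (Z.to_nat (2*R+1))).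
Lemma rng_in R z : (-R <= z <= R)%Z -> In z (rng R).
Proof.
  intros Hz. unfold rng. apply in_map_iff. exists (Z.to_nat (z + R)). split. lia.
  apply in_seq. lia.
Qed.

Definition clamp (R z : Z) : Z := Z.max (-R) (Z.min R z).
Lemma clamp_in R z : (0 <= R)%Z -> In (clamp R z) (rng R).
Proof. intros. apply rng_in. unfold clamp. lia. Qed.
Lemma clamp_id R z : (-R <= z <= R)%Z -> clamp R z = z.
Proof. unfold clamp. lia. Qed.

Lemma map_eq_in (A B : Type) (f g : A -> B) l v : map f l = map g l -> In v l -> f v = g v.
Proof.
  induction l as [|a l IH]; simpl; intros H Hv. destruct Hv.
  injection H; intros. destruct Hv as [<-|Hv]; auto.
Qed.

Section Fin.
Variable V : Type.
Variable adj : V -> V -> Prop.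
Hypothesis Hsym : forall x y, adj x y -> adj y x.
Hypothesis Hconn : connected V adj.
Hypothesis Hlf : locally_finite V adj.
Notation D := (d V adj).

Lemma ball_fin : forall (r : nat) u, exists l : list V, forall v, (D u v <= Z.of_nat r)%Z -> In v l.
Proof.
  assert (NB : exists nb : V -> list V, forall x y, adj x y -> In y (nb x)).
  { exists (fun x => proj1_sig (constructive_indefinite_description _ (Hlf x))).
    intros x y H. destruct (constructive_indefinite_description _ (Hlf x)) as [l Hl]. simpl. auto. }
  destruct NB as [nb Hnb].
  induction r as [|r IH]; intros u.
  - exists [u]. intros v Hv. left. apply (D_eq0 V adj Hconn). pose proof (D_nonneg V adj u v). lia.
  - destruct (IH u) as [l Hl]. exists (l ++ flat_map nb l). intros v Hv. apply in_or_app.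
    destruct (Z_le_gt_dec (D u v) (Z.of_nat r)) as [H|H]. left; auto.
    right. destruct (geodesic V adj Hconn u v) as [gam [G0 [GL [Gs Gd]]]].
    assert (Duv : D u v = Z.of_nat (Defs.dist V adj u v)) by reflexivity.
    destruct (Gd r ltac:(lia)) as [Q1 Q2].
    apply in_flat_map. exists (gam r). split. apply Hl. lia.
    apply Hnb. apply (dist1 V adj Hconn). unfold d in Q2. lia.
Qed.

Lemma small_atom x0 n x y : (D x x0 < Z.of_nat n)%Z -> atom V adj x0 n x y -> y = x.
Proof.
  intros Hx [c Hc].
  assert (Hxb : ball V adj x0 n x) by (apply ballD; rewrite (D_sym V adj Hsym Hconn); lia).
  pose proof (Hc x Hxb) as Ex. rewrite (D_refl V adj Hconn) in Ex.
  destruct (geodesic V adj Hconn y x) as [gam [G0 [GL [Gs Gd]]]].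
  assert (Dyx : D y x = Z.of_nat (Defs.dist V adj y x)) by reflexivity.
  destruct (Z.eq_dec c 0) as [E|E].
  - apply (D_eq0 V adj Hconn). lia.
  - exfalso. pose proof (D_nonneg V adj y x).
    set (L := Defs.dist V adj y x) in *.
    destruct (Gd (L - 1)%nat ltac:(lia)) as [Q1 Q2].
    assert (Hb : ball V adj x0 n (gam (L-1)%nat)).
    { apply ballD. pose proof (D_tri V adj Hconn x0 x (gam (L-1)%nat)).
      rewrite (D_sym V adj Hsym Hconn x0 x) in H0. rewrite (D_sym V adj Hsym Hconn x (gam (L-1)%nat)) in H0. lia. }
    pose proof (Hc _ Hb). rewrite (D_sym V adj Hsym Hconn x) in H0. lia.
Qed.
End Fin.

Lemma id_morph V adj G act (one : G) x0 n A B :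
  (forall v, act one v = v) -> (forall y, A y <-> B y) -> induces_morphism V adj G act x0 one n A n B.
Proof.
  intros H1 HAB. split; [|split].
  - intros z. split. intros [y [Hy <-]]. rewrite H1. apply HAB; auto.
    intros Hz. exists z. rewrite H1. split; auto. apply HAB; auto.
  - intros k z. split. intros [y [[Hy Hb] <-]]. rewrite H1. split; auto. apply HAB; auto.
    intros [Hz Hb]. exists z. rewrite H1. split; auto. split; auto. apply HAB; auto.
  - intros k Hk A1 HA1 Hsub. exists A1. split; auto. split.
    intros y Hy. apply HAB; auto.
    intros z. split. intros [y [Hy <-]]. rewrite H1; auto. intros Hz. exists z. rewrite H1; auto.
Qed.

Lemma atom_shift V adj x0 N x x2 y e :
  (forall b, ball V adj x0 N b -> (d V adj x b - d V adj x2 b = e)%Z) -> atom V adj x0 N x y -> atom V adj x0 N x2 y.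
Proof. intros H [c Hc]. exists (c + e)%Z. intros b Hb. specialize (H b Hb). specialize (Hc b Hb). lia. Qed.

Section Main.
Variable V : Type.
Variable adj : V -> V -> Prop.
Hypothesis Hsym : forall x y, adj x y -> adj y x.
Hypothesis Hconn : connected V adj.
Hypothesis Hlf : locally_finite V adj.
Variable x0 : V.
Variable K : Z.
Hypothesis HK : (0 <= K)%Z.
Notation D := (d V adj).
Open Scope Z_scope.
Hypothesis FP : forall w a b c,
  D a w + D b w - D a b >= D a w + D c w - D a c - K \/
  D a w + D b w - D a b >= D b w + D c w - D b c - K.
Variable G : Type.
Variables (mul : G -> G -> G) (one : G) (inv : G -> G).
Variable act : G -> V -> V.
Hypothesis Hisom : forall g x y, D (act g x) (act g y) = D x y.
Hypothesis Aone : forall v, act one v = v.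
Hypothesis Amul : forall g h v, act (mul g h) v = act g (act h v).
Hypothesis Hinv1 : forall g v, act (inv g) (act g v) = v.
Hypothesis Hinv2 : forall g v, act g (act (inv g) v) = v.
Hypothesis Hcocpt : cocompact_action V G act.

Ltac sy a b := pose proof (D_sym V adj Hsym Hconn a b).
Ltac tr a b c := pose proof (D_tri V adj Hconn a b c).
Ltac nn a b := pose proof (D_nonneg V adj a b).

Lemma main_core : exists reps : list (nat * (V -> Prop)),
    (forall p, In p reps -> in_An V adj x0 (fst p) (snd p)) /\
    (forall (n : nat) (A : V -> Prop), in_An V adj x0 n A ->
       exists p, In p reps /\ same_type V adj G act x0 n A (fst p) (snd p)).
Proof.
  remember (7*K+3) as R eqn:ER. remember (Z.to_nat R) as Rn eqn:ERn0.
  assert (ERn : Z.of_nat Rn = R) by lia.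
  assert (HBL : exists BL : V -> list V, forall u v, D u v <= R -> In v (BL u)).
  { exists (fun u => proj1_sig (constructive_indefinite_description _ (ball_fin V adj Hconn Hlf Rn u))).
    intros u v Huv. destruct (constructive_indefinite_description _ (ball_fin V adj Hconn Hlf Rn u)) as [l Hl].
    simpl. apply Hl. lia. }
  destruct HBL as [BL HBL].
  destruct Hcocpt as [U HU].
  set (smallKeys := flat_map (fun n => map (fun l => (n, x0, l, @nil Z)) (allL (length (BL x0)) (rng R))) (seq 0 Rn)).
  set (largeKeys := flat_map (fun u => flat_map (fun l1 => map (fun l2 => (Rn, u, l1, l2))
        (allL (length (BL u)) (rng R))) (allL (length (BL u)) (rng R))) U).
  set (KR := fun (a : nat * (V -> Prop)) (k : nat * V * list Z * list Z) =>
    match a, k with (n, A), (n0, u, l1, l2) =>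
      exists x, set_eq V A (atom V adj x0 n x) /\ D x x0 >= Z.of_nat n /\
      (((n < Rn)%nat /\ n0 = n /\ u = x0 /\ l2 = [] /\
          l1 = map (fun v => clamp R (D x v - D x x0)) (BL x0))
       \/ ((Rn <= n)%nat /\ n0 = Rn /\ exists p g0, D p x0 = Z.of_nat n /\ D x x0 = D x p + Z.of_nat n /\
           act g0 u = p /\ l1 = map (fun v => clamp R (D x0 (act g0 v) - Z.of_nat n)) (BL u) /\
           l2 = map (fun v => clamp R (D x (act g0 v) - D x p)) (BL u)))
    end).
  destruct (finite_classes (nat * (V -> Prop)) (nat * V * list Z * list Z)
     (fun a => in_An V adj x0 (fst a) (snd a))
     (fun a b => same_type V adj G act x0 (fst a) (snd a) (fst b) (snd b)) KR (smallKeys ++ largeKeys))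
    as [reps [R1 R2]].
  - intros [n A] [[x HA] Hinf]. simpl in HA, Hinf.
    assert (Hxn : D x x0 >= Z.of_nat n).
    { destruct (Z_le_gt_dec (Z.of_nat n) (D x x0)) as [H|H]. lia. exfalso. apply Hinf.
      exists [x]. intros y Hy. left. symmetry. apply (small_atom V adj Hsym Hconn x0 n x y). lia. apply HA; auto. }
    destruct (Nat.lt_ge_cases n Rn) as [Hs|Hl].
    + exists (n, x0, map (fun v => clamp R (D x v - D x x0)) (BL x0), @nil Z). split.
      * apply in_or_app. left. apply in_flat_map. exists n. split. apply in_seq. lia.
        apply in_map_iff. eexists; split; [reflexivity|]. rewrite <- (length_map (fun v => clamp R (D x v - D x x0)) (BL x0)).
        apply allL_in. intros z Hz. apply in_map_iff in Hz. destruct Hz as [v [<- _]]. apply clamp_in. lia.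
      * exists x. split; auto. split; auto. left. repeat split; auto.
    + destruct (geodesic V adj Hconn x x0) as [gam [G0 [GL [Gs Gd]]]].
      assert (Dx : D x x0 = Z.of_nat (Defs.dist V adj x x0)) by reflexivity.
      set (i := Z.to_nat (D x x0 - Z.of_nat n)).
      destruct (Gd i ltac:(unfold i; lia)) as [Q1 Q2].
      set (p := gam i) in *.
      destruct (HU p) as [u [g0 [Hu Hg0]]].
      exists (Rn, u, map (fun v => clamp R (D x0 (act g0 v) - Z.of_nat n)) (BL u),
                     map (fun v => clamp R (D x (act g0 v) - D x p)) (BL u)). split.
      * apply in_or_app. right. apply in_flat_map. exists u. split; auto.
        apply in_flat_map. exists (map (fun v => clamp R (D x0 (act g0 v) - Z.of_nat n)) (BL u)). split.
        -- rewrite <- (length_map (fun v => clamp R (D x0 (act g0 v) - Z.of_nat n)) (BL u)).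
           apply allL_in. intros z Hz. apply in_map_iff in Hz. destruct Hz as [v [<- _]]. apply clamp_in. lia.
        -- apply in_map_iff. eexists; split; [reflexivity|]. rewrite <- (length_map (fun v => clamp R (D x (act g0 v) - D x p)) (BL u)).
           apply allL_in. intros z Hz. apply in_map_iff in Hz. destruct Hz as [v [<- _]]. apply clamp_in. lia.
      * exists x. split; auto. split; auto. right. split; auto. split; auto.
        exists p, g0. unfold i in *. repeat split; auto; lia.
  - intros [n A] [m B] [[[n0 u] l1] l2] PA PB KA KB. simpl in KA, KB. cbn [fst snd].
    destruct KA as [x [HA [Hxn [[Hs [En [Eu [El2 El1]]]] | [Hl [En Hex]]]]]];
    destruct KB as [x2 [HB [Hxm [[Hs2 [Em [Eu2 [El22 El12]]]] | [Hl2 [Em Hex2]]]]]]; try lia.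
    + subst n0 u l1 l2. subst m.
      assert (Hsh : forall b, ball V adj x0 n b -> D x b - D x2 b = D x x0 - D x2 x0).
      { intros b Hb. apply ballD in Hb.
        assert (Hin : In b (BL x0)) by (apply HBL; lia).
        pose proof (map_eq_in _ _ _ _ _ _ El12 Hin) as Ec. simpl in Ec.
        tr x b x0. tr x x0 b. tr x2 b x0. tr x2 x0 b. sy b x0.
        rewrite (clamp_id R), (clamp_id R) in Ec; lia. }
      exists one. apply id_morph; auto. intros y. split; intros Hy.
      * apply HB. apply (atom_shift V adj x0 n x x2 y _ Hsh). apply HA; auto.
      * apply HA. apply (atom_shift V adj x0 n x2 x y (D x2 x0 - D x x0)). intros b Hb. specialize (Hsh b Hb). lia.
        apply HB; auto.
    + destruct Hex as [p [g0 [Hp [Hx [Hg0 [E1 E2]]]]]].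
      destruct Hex2 as [p2 [g2 [Hp2 [Hx2 [Hg2 [E12 E22]]]]]].
      subst l1 l2.
      exists (mul g2 (inv g0)).
      apply (morph V adj Hsym Hconn x0 K HK FP G act Hisom n m x x2 p p2 (mul g2 (inv g0)) (mul g0 (inv g2)) A B); auto.
      assert (Hloc : forall w, D w p <= 7*K+3 -> act (mul g2 (inv g0)) w = act g2 (act (inv g0) w) /\ In (act (inv g0) w) (BL u) /\ act g0 (act (inv g0) w) = w /\ D (act (inv g0) w) u <= R).
      { intros w Hw. assert (D (act (inv g0) w) u <= R) by (rewrite <- (Hisom g0), Hinv2, Hg0; lia).
        rewrite Amul, Hinv2. split; [auto|split; [apply HBL; sy u (act (inv g0) w); lia|split; auto]]. }
      unfold THyp. repeat split; auto.
      * intros v. rewrite !Amul, Hinv1, Hinv2. auto.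
      * intros v. rewrite !Amul, Hinv1, Hinv2. auto.
      * lia.
      * lia.
      * rewrite Amul, <- Hg0, Hinv1. auto.
      * intros w Hw. destruct (Hloc w Hw) as [L1 [L2 [L3 L4]]]. rewrite L1.
        pose proof (map_eq_in _ _ _ _ _ _ E12 L2) as Ec. simpl in Ec. rewrite L3 in Ec.
        rewrite <- (Hisom g2), Hg2 in L4.
        tr x0 w p. tr x0 p w. sy w p. tr x0 (act g2 (act (inv g0) w)) p2. tr x0 p2 (act g2 (act (inv g0) w)).
        sy x0 p. sy x0 p2. sy (act g2 (act (inv g0) w)) p2.
        rewrite (clamp_id R), (clamp_id R) in Ec; lia.
      * intros w Hw. destruct (Hloc w Hw) as [L1 [L2 [L3 L4]]]. rewrite L1.
        pose proof (map_eq_in _ _ _ _ _ _ E22 L2) as Ec. simpl in Ec. rewrite L3 in Ec.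
        rewrite <- (Hisom g2), Hg2 in L4.
        tr x w p. tr x p w. sy w p. tr x2 (act g2 (act (inv g0) w)) p2. tr x2 p2 (act g2 (act (inv g0) w)).
        sy (act g2 (act (inv g0) w)) p2.
        rewrite (clamp_id R), (clamp_id R) in Ec; lia.
  - exists reps. split; auto. intros n A HA. destruct (R2 (n, A) HA) as [r [Hr Er]]. exists r; auto.
Qed.
End Main.

Theorem mainTheorem19
  (V : Type) (adj : V -> V -> Prop) (x0 : V)
  (G : Type) (mul : G -> G -> G) (one : G) (inv : G -> G) (act : G -> V -> V)
  (Hsimple : simple_graph V adj)
  (Hlf : locally_finite V adj)
  (Hconn : connected V adj)
  (Hhyp : hyperbolic V adj)
  (Hgrp : is_group G mul one inv)
  (Hact : is_action V G mul one act)
  (Hisom : acts_by_isometries V G act adj)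
  (Hproper : proper_action V G act)
  (Hcocpt : cocompact_action V G act) :
  exists reps : list (nat * (V -> Prop)),
    (forall p, In p reps -> in_An V adj x0 (fst p) (snd p)) /\
    (forall (n : nat) (A : V -> Prop), in_An V adj x0 n A ->
       exists p, In p reps /\ same_type V adj G act x0 n A (fst p) (snd p)).
Proof.
  destruct Hsimple as [Hsym _].
  destruct Hhyp as [delta Hdelta].
  destruct Hgrp as (Ga & Gl & Gr & Gli & Gri).
  destruct Hact as (Aone & Amul).
  assert (HK : (0 <= Z.max 0 (2*delta))%Z) by lia.
  assert (FP : forall w a b c,
    (d V adj a w + d V adj b w - d V adj a b >= d V adj a w + d V adj c w - d V adj a c - Z.max 0 (2*delta) \/
    d V adj a w + d V adj b w - d V adj a b >= d V adj b w + d V adj c w - d V adj b c - Z.max 0 (2*delta))%Z).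
  { intros w a b c. pose proof (Hdelta w a b c) as H. unfold gromov2 in H. lia. }
  assert (Hinv1 : forall g v, act (inv g) (act g v) = v).
  { intros g v. rewrite <- Amul, Gli, Aone. auto. }
  assert (Hinv2 : forall g v, act g (act (inv g) v) = v).
  { intros g v. rewrite <- Amul, Gri, Aone. auto. }
  exact (main_core V adj Hsym Hconn Hlf x0 (Z.max 0 (2*delta)) HK FP G mul one inv act Hisom Aone
    (fun g h v => Amul g h v) Hinv1 Hinv2 Hcocpt).
Qed.
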